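(* For all integers $f,n\ge0$ with $(f,n)\neq(0,0)$, one has $T_{0,0}(q)=1$ and $$T_{f,n}(q)=T_{f,n-1}(q)+\{n+1\}\,T_{f-1,n+1}(q),$$ where $T_{f,n}(q)$ is interpreted as $0$ if $f$ or $n$ is negative.
   Context: For $f,n\ge0$, a chord diagram with $f$ free chords and $n$ tethered chords is described combinatorially as follows: take $2f+n$ points on a circle labelled $1,2,\dots,2f+n$ in clockwise order starting after a fixed basepoint; choose an $n$-element subset of these points (the endpoints of the tethered chords, each joined by a chord to the basepoint) and a perfect matching of the remaining $2f$ points into $f$ free chords. The number of crossings of such a diagram is the number of pairs of free chords $\{a<b\},\{c<d\}$ with $a<c<b<d$, plus the number of pairs (tethered endpoint $p$, free chord $\{a<b\}$) with $a<p<b$. Let $N(f,n,c)$ be the number of such diagrams with $c$ crossings and $T_{f,n}(q):=\sum_cN(f,n,c)q^c\in\mathbb N[q]$. Also $\{m\}:=1+q+\cdots+q^{m-1}$ is the classical $q$-integer. *)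

(* Defs.v *)
From HB Require Import structures.
From mathcomp Require Import all_boot all_order all_algebra.
Set Implicit Arguments. Unset Strict Implicit. Unset Printing Implicit Defensive.
Import GRing.Theory.
Local Open Scope ring_scope.

(* A chord diagram with f free chords and n tethered chords on the points
   0, 1, ..., 2f+n-1 (standing for 1, ..., 2f+n, in clockwise order after
   the basepoint) is encoded by an involution p of 'I_(2f+n) with exactly n
   fixed points: the fixed points are the tethered endpoints, and the
   2-cycles {a, p a} are the free chords.  This is in bijection with the
   data (n-subset, perfect matching of its complement). *)
Definition diagram_pts (f n : nat) := (2 * f + n)%N.

Definition is_diagram (f n : nat) (p : {ffun 'I_(diagram_pts f n) -> 'I_(diagram_pts f n)}) : bool := 
  [forall x, p (p x) == x] && (#|[set x | p x == x]| == n).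

(* crossings of two free chords {a < b}, {c < d} with a < c < b < d:
   counted once via the pair (a, c) *)
Arguments is_diagram : clear implicits.

Definition free_crossings (N : nat) (p : {ffun 'I_N -> 'I_N}) : nat :=
  #|[set ac : 'I_N * 'I_N | (ac.1 < ac.2)%N && (ac.2 < p ac.1)%N && (p ac.1 < p ac.2)%N]|.

(* crossings of a tethered endpoint t (fixed point) with a free chord {a < b},
   a < t < b: counted via the pair (t, a) *)
Definition teth_crossings (N : nat) (p : {ffun 'I_N -> 'I_N}) : nat :=
  #|[set ta : 'I_N * 'I_N | (p ta.1 == ta.1) && (ta.2 < ta.1)%N && (ta.1 < p ta.2)%N]|.

Definition crossings (N : nat) (p : {ffun 'I_N -> 'I_N}) : nat :=
  (free_crossings p + teth_crossings p)%N.

Definition Ncount (f n c : nat) : nat :=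
  #|[set p | is_diagram f n p & crossings p == c]|.

(* Every diagram on N points has at most 2*N^2 crossings (each kind of
   crossing is counted by a subset of 'I_N * 'I_N), so c ranges over
   0 .. 2*N^2 without loss. *)
Definition T (f n : nat) : {poly int} :=
  \sum_(c < (2 * (diagram_pts f n) ^ 2).+1) (Ncount f n c)%:R *: 'X^c.

Definition qint (m : nat) : {poly int} := \sum_(i < m) 'X^i.

(* Main.v *)
Require Import Defs.
From HB Require Import structures.
From mathcomp Require Import all_boot all_order all_algebra.
From mathcomp Require Import zify.
Import GRing.Theory.
Set Implicit Arguments. Unset Strict Implicit.

Ltac brute := repeat (match goal with
  | |- context [if ?x == ?y then _ else _] => case: (eqVneq x y) => ?
  | |- context [?x == ?y] => case: (eqVneq x y) => ?
  | |- context [leq ?x ?y] => case: (leqP x y) => ?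
  end; subst => /=; try (intros; exfalso; lia)); intros; try lia.

Definition nv N (p : {ffun 'I_N -> 'I_N}) (i : nat) : nat :=
  if (insub i : option 'I_N) is Some x then val (p x) else i.

Lemma nvE N (p : {ffun 'I_N -> 'I_N}) (x : 'I_N) : nv p x = p x.
Proof. by rewrite /nv valK. Qed.

Lemma nv_lt N (p : {ffun 'I_N -> 'I_N}) i : i < N -> nv p i < N.
Proof. move=> Hi; rewrite (_ : i = Ordinal Hi) // nvE; exact: ltn_ord. Qed.

Lemma ffun_nv N (p1 p2 : {ffun 'I_N -> 'I_N}) :
  (forall i, i < N -> nv p1 i = nv p2 i) -> p1 = p2.
Proof. move=> H; apply/ffunP => x; apply: ord_inj; rewrite -!nvE; exact: H. Qed.

Lemma invP N (p : {ffun 'I_N -> 'I_N}) :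
  reflect (forall i, i < N -> nv p (nv p i) = i) [forall x, p (p x) == x].
Proof.
apply: (iffP forallP) => H.
- move=> i Hi; have := H (Ordinal Hi); move/eqP/(congr1 val); by rewrite /= -!nvE.
- move=> x; apply/eqP/val_inj; rewrite /= -!nvE; exact: H (ltn_ord x).
Qed.

Lemma fixE N (p : {ffun 'I_N -> 'I_N}) :
  #|[set x | p x == x]| = \sum_(i < N) (nv p i == i).
Proof.
rewrite -sum1_card big_mkcond /=; apply: eq_bigr => i _.
by rewrite inE nvE val_eqE; case: (p i == i).
Qed.

Definition crN N (g : nat -> nat) : nat :=
  \sum_(a < N) \sum_(c < N) ((a < c) && (c < g a) && (g a < g c)) +
  \sum_(t < N) \sum_(a < N) ((g t == t) && (a < t) && (t < g a)).

Lemma crE N (p : {ffun 'I_N -> 'I_N}) : crossings p = crN N (nv p).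
Proof.
rewrite /crossings /free_crossings /teth_crossings /crN; congr (_ + _);
  rewrite pair_big -sum1_card big_mkcond /=; apply: eq_bigr => [[a c]] _;
  by rewrite inE /= !nvE ?val_eqE; case: ifP.
Qed.

Lemma peel2 M (F : nat -> nat -> nat) :
  \sum_(a < M.+1) \sum_(c < M.+1) F a c =
  \sum_(a < M) \sum_(c < M) F a c + \sum_(a < M) F a M + \sum_(c < M.+1) F M c.
Proof.
rewrite big_ord_recr /=; congr (_ + _); rewrite -big_split /=.
by apply: eq_bigr => a _; rewrite big_ord_recr.
Qed.

Lemma sum_eq1 M (bb : nat) (X : bool) : \sum_(a < M) ((a == bb :> nat) && X) = (bb < M) && X.
Proof.
elim: M => [|M IH]; first by rewrite big_ord0.
rewrite big_ord_recr /= IH; clear IH; case: X; brute.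
Qed.

Unset Implicit Arguments.


Lemma free_term (M bb a c ga gc : nat) : a < M -> c < M -> ga < M -> gc < M -> bb <= M ->
 (c == bb) ==> (gc == bb) -> (a == bb) ==> (ga == bb) ->
 ((a < c) && (c < (if a == M then bb else if a == bb then M else ga)) &&
  ((if a == M then bb else if a == bb then M else ga) < (if c == M then bb else if c == bb then M else gc)) : nat)
 = ((a<c) && (c<ga) && (ga<gc)) + ((c == bb) && (a < bb) && (bb < ga)).
Proof. brute. Qed.

Lemma teth_term (M bb a t ga gt : nat) : a < M -> t < M -> ga < M -> gt < M -> bb <= M ->
 (t == bb) ==> (gt == bb) -> (a == bb) ==> (ga == bb) ->
 ((if t == M then bb else if t == bb then M else gt) == t) && (a < t) &&
   (t < (if a == M then bb else if a == bb then M else ga)) +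
 ((t == bb) && (a < bb) && (bb < ga))
 = ((gt == t) && (a < t) && (t < ga)) + ((a == bb) && (gt == t) && (bb < t)).
Proof. brute. Qed.

Section Ext.
Variables (M bb : nat) (g r : nat -> nat).
Hypothesis Hb : bb <= M.
Hypothesis Hg : forall i, i < M -> g i < M.
Hypothesis Hgb : bb < M -> g bb = bb.
Hypothesis Hr : forall i, i < M.+1 -> r i = if i == M then bb else if i == bb then M else g i.

Lemma gbb i : (i == bb) ==> (g i == bb) || (M <= i).
Proof. case: (eqVneq i bb) => // ->; case: (ltnP bb M) => [/Hgb ->|]; rewrite ?eqxx ?orbT //. Qed.

Lemma HrM i : i < M -> r i = if i == bb then M else g i.
Proof. move=> Hi; rewrite (Hr i (ltnW Hi)) ifN //; by rewrite neq_ltn Hi. Qed.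

Lemma rle i : i < M.+1 -> r i <= M.
Proof. move=> Hi; rewrite (Hr i Hi); have := Hg i; move: Hi Hb; brute. Qed.

Lemma crN_ext : crN M.+1 r = crN M g + \sum_(t < M) ((g t == t) && (bb < t)).
Proof.
rewrite /crN (peel2 M (fun a c => (a < c) && (c < r a) && (r a < r c)))
  (peel2 M (fun t a => (r t == t) && (a < t) && (t < r a))) /=.
have Z1 : \sum_(a < M) ((a < M) && (M < r a) && (r a < r M)) = 0.
  by apply: big1 => a _; have := @rle a (ltnW (ltn_ord a)); brute.
have Z2 : \sum_(c < M.+1) ((M < c) && (c < r M) && (r M < r c)) = 0.
  by apply: big1 => c _; have := ltn_ord c; brute.
have Z3 : \sum_(t < M) ((r t == t) && (M < t) && (t < r M)) = 0.
  by apply: big1 => t _; have := ltn_ord t; brute.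
have Z4 : \sum_(a < M.+1) ((r M == M) && (a < M) && (M < r a)) = 0.
  by apply: big1 => a _; have := @rle a (ltn_ord a); brute.
rewrite Z1 Z2 Z3 Z4 !addn0.
have F1 : \sum_(a < M) \sum_(c < M) ((a < c) && (c < r a) && (r a < r c)) =
   \sum_(a < M) \sum_(c < M) ((a < c) && (c < g a) && (g a < g c)) +
   \sum_(a < M) \sum_(c < M) ((c == bb :> nat) && (a < bb) && (bb < g a)).
  rewrite -big_split; apply: eq_bigr => a _; rewrite -big_split; apply: eq_bigr => c _ /=.
  have Ha := ltn_ord a; have Hc := ltn_ord c.
  rewrite (Hr a (ltnW Ha)) (Hr c (ltnW Hc)); apply: free_term => //; try exact: Hg.
  - by have := gbb c; case: (c == bb :> nat) => //= /orP [] // ; lia.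
  - by have := gbb a; case: (a == bb :> nat) => //= /orP [] // ; lia.
have T1 : \sum_(t < M) \sum_(a < M) ((r t == t) && (a < t) && (t < r a)) +
   \sum_(t < M) \sum_(a < M) ((t == bb :> nat) && (a < bb) && (bb < g a)) =
   \sum_(t < M) \sum_(a < M) ((g t == t) && (a < t) && (t < g a)) +
   \sum_(t < M) \sum_(a < M) ((a == bb :> nat) && (g t == t) && (bb < t)).
  rewrite -!big_split; apply: eq_bigr => t _; rewrite -!big_split; apply: eq_bigr => a _ /=.
  have Ha := ltn_ord a; have Ht := ltn_ord t.
  rewrite (Hr a (ltnW Ha)) (Hr t (ltnW Ht)); apply: teth_term => //; try exact: Hg.
  - by have := gbb t; case: (t == bb :> nat) => //= /orP [] // ; lia.
  - by have := gbb a; case: (a == bb :> nat) => //= /orP [] // ; lia.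
have E : \sum_(a < M) \sum_(c < M) ((c == bb :> nat) && (a < bb) && (bb < g a)) =
         \sum_(t < M) \sum_(a < M) ((t == bb :> nat) && (a < bb) && (bb < g a)).
  by rewrite exchange_big.
have B : \sum_(t < M) \sum_(a < M) ((a == bb :> nat) && (g t == t) && (bb < t)) =
         \sum_(t < M) ((g t == t) && (bb < t)).
  apply: eq_bigr => t _; under eq_bigr => a _ do rewrite -andbA.
  by rewrite sum_eq1; have := ltn_ord t; brute.
have arith : forall x y z w u e, x = z + e -> y + e = w + u -> x + y = z + w + u.
  by move=> *; lia.
apply: (arith _ _ _ _ _ _ F1); rewrite -B E; exact: T1.
Qed.

Lemma fix_ext : \sum_(i < M.+1) (r i == i) + (bb < M) = \sum_(i < M) (g i == i) + (bb == M).
Proof.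
rewrite big_ord_recr /= (Hr M (ltnSn M)) eqxx.
have -> : ((bb < M) : nat) = \sum_(i < M) ((i == bb :> nat) && true).
  by rewrite sum_eq1 andbT.
rewrite addnAC -big_split /=; congr (_ + _); apply: eq_bigr => i _.
have Hi := ltn_ord i; rewrite (Hr i (ltnW Hi)) andbT.
have := gbb i; have := Hg i Hi; move: Hi Hb; brute.
Qed.

Lemma inv_ext : (forall i, i < M.+1 -> r (r i) = i) <-> (forall i, i < M -> g (g i) = i).
Proof.
split => H i Hi.
- case: (eqVneq i bb) => [Ei|ne]; first by subst i; rewrite (Hgb Hi) (Hgb Hi).
  have := H i (ltnW Hi); rewrite (HrM i Hi) (negbTE ne).
  rewrite (HrM (g i) (Hg i Hi)); have := Hg i Hi; move: Hi ne; brute.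
- rewrite (Hr i Hi); case: (eqVneq i M) => [Ei|nM].
    rewrite (Hr bb Hb); brute.
  case: (eqVneq i bb) => [Ei|nb]; first by rewrite (Hr M (ltnSn M)) eqxx.
  have HiM : i < M by lia.
  rewrite (HrM (g i) (Hg i HiM)).
  case: (eqVneq (g i) bb) => [E|nE].
    have : bb < M by rewrite -E Hg.
    move=> /Hgb Eb; have := H i HiM; rewrite E Eb => Ei; move: nb; rewrite Ei eqxx //.
  by rewrite H.
Qed.
End Ext.

Section Rec.
Variable M : nat.

Definition ext (b : 'I_M.+1) (q : {ffun 'I_M -> 'I_M}) : {ffun 'I_M.+1 -> 'I_M.+1} :=
  [ffun i : 'I_M.+1 => inord (if val i == M then val b else if val i == val b then M else nv q i)].
Definition res (p : {ffun 'I_M.+1 -> 'I_M.+1}) : {ffun 'I_M -> 'I_M} :=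
  [ffun j : 'I_M => odflt j (insub (nv p j))].

Lemma nv_ext b q i : i < M.+1 ->
  nv (ext b q) i = if i == M then val b else if i == val b then M else nv q i.
Proof.
move=> Hi; rewrite {1}(_ : i = Ordinal Hi) // nvE ffunE /= inordK //.
case: ifP => [_|/eqP HiM]; first exact: ltn_ord.
case: ifP => // _; apply: ltnW; apply: nv_lt; lia.
Qed.

Lemma nv_res p j : j < M -> nv (res p) j = if nv p j < M then nv p j else j.
Proof.
move=> Hj; rewrite {1}(_ : j = Ordinal Hj) // nvE ffunE.
case: insubP => [y Hy Hv|Hn] /=; first by rewrite Hv Hy.
by rewrite (negbTE Hn).
Qed.
End Rec.
Arguments ext {M}.
Arguments res {M}.
Arguments nv_ext {M}.
Arguments nv_res {M}.

Notation XX n := ((polyX int) ^+ n)%R.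

Definition Dp N n (p : {ffun 'I_N -> 'I_N}) :=
  [forall x, p (p x) == x] && (#|[set x | p x == x]| == n).

Arguments Dp {N}.

Lemma Sb M n (b : 'I_M.+1) :
 (\sum_(p : {ffun 'I_M.+1 -> 'I_M.+1} | (Dp n p && (p ord_max == b))%N) XX (crossings p) =
 \sum_(q : {ffun 'I_M -> 'I_M} | ([forall x, q (q x) == x] &&
      (if val b == M then (#|[set x | q x == x]|).+1 == n
       else (nv q b == b) && (#|[set x | q x == x]| == n.+1)))%N)
   XX (crossings q + \sum_(t < M) ((nv q t == t) && (b < t)))%N)%R.
Proof.
have Hg (q : {ffun 'I_M -> 'I_M}) : forall i, i < M -> nv q i < M.
  by move=> i Hi; exact: nv_lt.
rewrite (reindex_onto (ext b) (@res M)); last first.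
  move=> p /andP [/andP [/invP Hinv _] /eqP Hb].
  have HpM : nv p M = b by have := nvE p ord_max; rewrite Hb => H; exact: H.
  apply: ffun_nv => i Hi; rewrite (nv_ext b (res p) i Hi).
  case: (eqVneq i M) => [->|nM]; first by rewrite HpM.
  case: (eqVneq i b) => [->|nb]; first by rewrite -HpM Hinv.
  have HiM : i < M by lia.
  rewrite (nv_res p i HiM); case: (ltnP (nv p i) M) => [//|Hge].
  have E : nv p i = M by have := nv_lt p Hi; lia.
  by have := Hinv i Hi; rewrite E HpM => Eb; move: nb; rewrite Eb eqxx.
have Eres q : (res (ext b q) == q) = (val b == M) || (nv q b == b).
  apply/eqP/idP.
  - move=> E; case: (eqVneq (val b) M) => //= nbM.
    have Hb : b < M by have := ltn_ord b; lia.
    have : nv (res (ext b q)) b = nv q b by rewrite E.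
    rewrite (nv_res _ b Hb) (nv_ext b q b (ltn_ord b)) (negbTE nbM) eqxx ltnn /= => <-; exact: eqxx.
  - move=> H; apply: ffun_nv => j Hj; rewrite (nv_res _ j Hj) (nv_ext b q j (ltnW Hj)).
    by have := Hg q j Hj; move: H Hj; brute.
apply: eq_big => q.
- have Eo : (ext b q ord_max == b) = true.
    by apply/eqP/ord_inj; rewrite -nvE (nv_ext b q M (ltnSn M)) eqxx.
  have HF := fun H => @fix_ext M b _ _ (ltn_ord b) (Hg q) H (nv_ext b q).
  rewrite /Dp !fixE.
  case: (eqVneq (val b) M) => HbM.
  + have Hgb : b < M -> nv q b = b by rewrite HbM ltnn.
    have HF' := HF Hgb; rewrite HbM ltnn eqxx in HF'.
    have -> : [forall x, ext b q (ext b q x) == x] = [forall x, q (q x) == x].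
      have L := @inv_ext M b _ _ (ltn_ord b) (Hg q) Hgb (nv_ext b q).
        by apply/invP/invP; [exact: (proj1 L) | exact: (proj2 L)].
    rewrite addn0 addn1 in HF'.
    rewrite Eo Eres HbM eqxx /= !andbT; congr (_ && _); apply/eqP/eqP => <-; by rewrite HF'.
  + case: (eqVneq (nv q b) b) => Hgb.
    * have Hgb' : b < M -> nv q b = b by [].
      have HF' := HF Hgb'; rewrite (negbTE HbM) in HF'.
      have -> : [forall x, ext b q (ext b q x) == x] = [forall x, q (q x) == x].
        have L := @inv_ext M b _ _ (ltn_ord b) (Hg q) Hgb' (nv_ext b q).
        by apply/invP/invP; [exact: (proj1 L) | exact: (proj2 L)].
      rewrite Eo Eres Hgb eqxx orbT /= !andbT; congr (_ && _).
      have : b < M by have := ltn_ord b; lia.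
      move=> Hb; rewrite Hb addn0 addn1 in HF'.
      apply/eqP/eqP => [<-|E]; [by rewrite -HF' | by move: HF'; rewrite E => [[]]].
    * by rewrite Eres (negbTE HbM) (negbTE Hgb) /= !andbF.
- move=> /andP [_ Hc].
  have Hgb : b < M -> nv q b = b.
    move: Hc; rewrite Eres => /orP [E|/eqP E] Hlt; last exact: E.
    by move: Hlt; rewrite (eqP E) ltnn.
  congr (GRing.exp _ _); rewrite !crE; exact: (@crN_ext M b _ _ (ltn_ord b) (Hg q) Hgb (nv_ext b q)).
Qed.

Local Open Scope ring_scope.

Lemma sum_b_le N (F : nat -> bool) : (\sum_(i < N) F i <= N)%N.
Proof.
elim: N => [|N IH]; first by rewrite big_ord0.
rewrite big_ord_recr /= -addn1; exact: leq_add IH (leq_b1 _).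
Qed.

Lemma qint_sum (f : nat -> bool) M :
  \sum_(b < M | f b) 'X^(\sum_(t < M) (f t && (b < t)%N))%N = qint (\sum_(t < M) f t)%N.
Proof.
elim: M => [|M IH]; first by rewrite !big_ord0 /qint big_ord0.
have inner (b : 'I_M) : (\sum_(t < M.+1) (f t && (b < t)%N))%N =
    (\sum_(t < M) (f t && (b < t)%N) + f M)%N.
  by rewrite big_ord_recr /= (ltn_ord b) andbT.
have last : (\sum_(t < M.+1) (f t && (M < t)%N))%N = 0%N.
  by apply: big1 => t _; rewrite ltnNge -ltnS ltn_ord andbF.
rewrite big_ord_recr /= big_mkcond big_ord_recr /= last expr0.
under eq_bigr => b _ do rewrite (inner b).
rewrite /qint; case: (f M) => /=.
- rewrite addn1 big_ord_recl expr0 addrC; congr (_ + _).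
  have -> : \sum_(i < \sum_(i < M) f i) 'X^(lift ord0 i) =
            'X * \sum_(i < \sum_(i < M) f i) ('X^i : {poly int}).
    by rewrite mulr_sumr; apply: eq_bigr => i _; rewrite lift0 exprS.
  move: IH; rewrite /qint => <-; rewrite mulr_sumr [RHS]big_mkcond; apply: eq_bigr => b _.
  by case: (f b); rewrite ?mulr0 // addn1 exprS.
- rewrite addr0 addn0; under eq_bigr => b _ do rewrite addn0.
  by rewrite -big_mkcond; move: IH; rewrite /qint.
Qed.

Definition Gs N n : {poly int} := \sum_(p : {ffun 'I_N -> 'I_N} | Dp n p) 'X^(crossings p).

Definition Rb M n (b : nat) : {poly int} :=
 \sum_(q : {ffun 'I_M -> 'I_M} | ([forall x, q (q x) == x] &&
      (if b == M then (#|[set x | q x == x]|).+1 == n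
       else (nv q b == b) && (#|[set x | q x == x]| == n.+1)))%N)
   'X^(crossings q + \sum_(t < M) ((nv q t == t) && (b < t)))%N.

Lemma Rb_max M n : Rb M n M = if (0 < n)%N then Gs M n.-1 else 0.
Proof.
rewrite /Rb eqxx.
have B0 (q : {ffun 'I_M -> 'I_M}) : (\sum_(t < M) ((nv q t == t) && (M < t)))%N = 0%N.
  by apply: big1 => t _; rewrite ltnNge ltnW ?andbF.
under eq_bigr => q _ do rewrite B0 addn0.
case: n => [|n] /=.
  by apply: big_pred0 => q; rewrite andbF.
by rewrite /Gs /Dp; apply: eq_bigl => q; rewrite eqSS.
Qed.

Lemma Rb_sum M n : \sum_(b < M) Rb M n b = qint n.+1 * Gs M n.+1.
Proof.
have step (b : 'I_M) : Rb M n b = \sum_(q : {ffun 'I_M -> 'I_M} | Dp n.+1 q)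
    (if nv q b == b then 'X^(crossings q + \sum_(t < M) ((nv q t == t) && (b < t)))%N else 0).
  rewrite /Rb (ltn_eqF (ltn_ord b)) big_mkcond [RHS]big_mkcond; apply: eq_bigr => q _ /=.
  rewrite /Dp.
  by case: [forall x, q (q x) == x]; case: (nv q b == b); case: (#|[set x | q x == x]| == n.+1).
under eq_bigr => b _ do rewrite step.
rewrite exchange_big /Gs mulr_sumr.
apply: eq_bigr => q /andP [_ /eqP Hfix].
rewrite -big_mkcond /=.
under eq_bigr => b _ do rewrite exprD.
rewrite -mulr_sumr mulrC; congr (_ * _).
rewrite (qint_sum (fun t => nv q t == t)) -Hfix fixE //.
Qed.

Lemma Grec M n : Gs M.+1 n = (if (0 < n)%N then Gs M n.-1 else 0) + qint n.+1 * Gs M n.+1.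
Proof.
rewrite {1}/Gs (partition_big (fun p : {ffun 'I_M.+1 -> 'I_M.+1} => p ord_max) xpredT) //=.
rewrite (eq_bigr (fun b : 'I_M.+1 => Rb M n b)); last by move=> b _; exact: Sb.
rewrite big_ord_recr /= Rb_max addrC; congr (_ + _).
by rewrite -Rb_sum.
Qed.

Lemma card_le N (A : {set 'I_N * 'I_N}) : (#|A| <= N * N)%N.
Proof. by have := subset_leq_card (subsetT A); rewrite cardsT card_prod card_ord. Qed.

Lemma cr_lt N (p : {ffun 'I_N -> 'I_N}) : (crossings p < (2 * N ^ 2).+1)%N.
Proof.
rewrite ltnS /crossings /free_crossings /teth_crossings.
apply: (@leq_trans (#|{: 'I_N * 'I_N}| + #|{: 'I_N * 'I_N}|)); first exact: leq_add (max_card _) (max_card _).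
rewrite card_prod card_ord.
by rewrite -mulnn mul2n addnn.
Qed.

Lemma TG f n : T f n = Gs (diagram_pts f n) n.
Proof.
rewrite /T /Gs /Ncount.
have E c : ((#|[set p | is_diagram f n p & crossings p == c]|)%:R : int) =
    \sum_(p | is_diagram f n p) ((crossings p == c : nat)%:R).
  rewrite -sum1_card natr_sum big_mkcond [RHS]big_mkcond /=; apply: eq_bigr => p _.
  by rewrite inE; case: (is_diagram f n p); case: (crossings p == c).
under eq_bigr => c _ do rewrite E scaler_suml.
rewrite exchange_big /=; apply: eq_bigr => p _.
rewrite (bigD1 (Ordinal (cr_lt _ p))) /=; last by [].
rewrite eqxx scale1r big1 ?addr0; first by [].
move=> i ne; have : crossings p != i.
  apply: contra ne => /eqP e; apply/eqP/ord_inj; by rewrite /= -e.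
by move/negbTE => ->; rewrite /= mulr0n scale0r.
Qed.

Lemma G00 : Gs 0 0 = 1.
Proof.
rewrite /Gs (big_pred1 [ffun x => x]).
  by rewrite crE /crN !big_ord0 expr0.
move=> p /=.
have -> : p == [ffun x => x] by apply/eqP/ffunP => [[m Hm]].
rewrite /Dp fixE big_ord0 andbT; by apply/forallP => [[m Hm]].
Qed.

Lemma Ggt N n : (N < n)%N -> Gs N n = 0.
Proof.
move=> Hn; apply: big_pred0 => p; apply/negbTE; rewrite /Dp negb_and; apply/orP; right.
rewrite fixE; have := sum_b_le N (fun i => nv p i == i).
by case: eqP => // ->; rewrite leqNgt Hn.
Qed.

Theorem lemma2p4 :
  T 0 0 = 1 /\
  (forall f n : nat, (f, n) != (0%N, 0%N) ->
     T f n = (if (0 < n)%N then T f n.-1 else 0)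
             + (if (0 < f)%N then qint n.+1 * T f.-1 n.+1 else 0)).
Proof.
split; first by rewrite TG G00.
move=> f n Hfn; rewrite TG.
case: n Hfn => [|n] Hfn.
- case: f Hfn => [|f] Hfn; first by rewrite eqxx in Hfn.
  have -> : diagram_pts f.+1 0 = (diagram_pts f 1).+1 by rewrite /diagram_pts; lia.
  by rewrite Grec /= !add0r TG.
- have -> : diagram_pts f n.+1 = (diagram_pts f n).+1 by rewrite /diagram_pts; lia.
  rewrite Grec /= -TG; congr (_ + _).
  case: f Hfn => [|f] Hfn /=.
    by rewrite Ggt ?mulr0 // /diagram_pts; lia.
  have -> : diagram_pts f.+1 n = diagram_pts f n.+2 by rewrite /diagram_pts; lia.
  by rewrite TG.
Qed.
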